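(* Let $n\ge 5$. Then for every $1\le r\le n$, the set $N(W_r)$ (of size $n-1$) is not a strong resolving set of $L(n)$.
   Context: For $n\ge 5$, $H(n)$ is the graph with vertex set $V_1\cup V_2$, where $V_1=\{v_1,\dots,v_n\}$ and $V_2=\{v_iv_j: 1\le i<j\le n\}$, and $v_r$ is adjacent to $v_iv_j$ iff $r\in\{i,j\}$ (no other edges). $L(n)$ is the line graph of $H(n)$: its vertices are the edges $\{v_r,v_iv_j\}$ of $H(n)$ (with $r\in\{i,j\}$), two being adjacent iff they share an endpoint. For $1\le r\le n$, $W_r$ is the set of vertices of $L(n)$ of the form $\{v_r,v_iv_j\}$; it is a maximal clique of size $n-1$. $N(W_r)$ denotes the set of vertices of $L(n)$ not in $W_r$ adjacent to some vertex of $W_r$, i.e. $N(W_r)=\{\{v_k,v_iv_j\}: k\neq r,\ \{i,j\}=\{r,k\}\}$. A set $Q\subseteq V(G)$ is a strong resolving set of $G$ if for any two distinct vertices $p,q$ there is $s\in Q$ such that $p$ lies on some shortest $q$–$s$ path or $q$ lies on some shortest $p$–$s$ path. *)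

(* Defs.v *)
From mathcomp Require Import all_boot.
Set Implicit Arguments. Unset Strict Implicit. Unset Printing Implicit Defensive.

Definition is_walk (V : finType) (adj : rel V) (x y : V) (p : seq V) : Prop :=
  path adj x p /\ last x p = y.

Definition is_shortest_path (V : finType) (adj : rel V) (x y : V) (p : seq V) : Prop :=
  is_walk adj x y p /\ forall q : seq V, is_walk adj x y q -> size p <= size q.

Definition on_shortest_path (V : finType) (adj : rel V) (z x y : V) : Prop :=
  exists p : seq V, is_shortest_path adj x y p /\ z \in x :: p.

Definition strong_resolving (V : finType) (adj : rel V) (Q : {set V}) : Prop :=
  forall p q : V, p != q ->
    exists2 s, s \in Q &
      (on_shortest_path adj p q s \/ on_shortest_path adj q p s).

Definition nbhd_set (V : finType) (adj : rel V) (A : {set V}) : {set V} :=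
  [set x | (x \notin A) && [exists y in A, adj y x]].

(* Indices 1..n are represented by 'I_n = {0,...,n-1}.  The vertex v_i v_j of V_2
   is represented by the 2-element set {i,j}.  An edge {v_r, v_i v_j} of H(n)
   (with r in {i,j}) is represented by the pair (r, {i,j}). *)

Definition Lvert_pred (n : nat) (e : 'I_n * {set 'I_n}) : bool :=
  (#|e.2| == 2) && (e.1 \in e.2).

(* vertices of L(n) = edges of H(n) *)
Definition Lvert (n : nat) := {e : 'I_n * {set 'I_n} | Lvert_pred e}.

(* two edges of H(n) are adjacent in L(n) iff distinct and share an endpoint *)
Definition Ladj (n : nat) : rel (Lvert n) :=
  fun a b => (a != b) && (((val a).1 == (val b).1) || ((val a).2 == (val b).2)).

Definition W (n : nat) (r : 'I_n) : {set Lvert n} :=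
  [set a : Lvert n | (val a).1 == r].

Definition NW (n : nat) (r : 'I_n) : {set Lvert n} := nbhd_set (@Ladj n) (W r).

(* Main.v *)
Require Import Defs.
From mathcomp Require Import all_boot.
Set Implicit Arguments. Unset Strict Implicit. Unset Printing Implicit Defensive.

Section Gen.
Variables (V : finType) (adj : rel V).

Lemma walk_ge1 x y p : is_walk adj x y p -> x != y -> 1 <= size p.
Proof. by case: p => [|z p] //= [_ <-]; rewrite eqxx. Qed.

Lemma walk_ge2 x y p : is_walk adj x y p -> x != y -> ~~ adj x y -> 2 <= size p.
Proof.
case: p => [|z [|w p]] //= [].
  by move=> _ <-; rewrite eqxx.
by move=> /andP[h _] <- _; rewrite h.
Qed.

Lemma walk_split x y z p : is_walk adj x y p -> z \in x :: p ->
  exists p1 p2, [/\ is_walk adj x z p1, is_walk adj z y p2 & size p = size p1 + size p2].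
Proof.
move=> [hp hl] hz; case/splitPl: hz hp hl => p1 p2 hz.
rewrite cat_path last_cat hz => /andP[h1 h2] hl.
by exists p1, p2; split => //; rewrite size_cat.
Qed.

Lemma sp_bound x y z P : is_shortest_path adj x y P -> z \in x :: P ->
  forall m1 m2 w, (forall p1, is_walk adj x z p1 -> m1 <= size p1) ->
  (forall p2, is_walk adj z y p2 -> m2 <= size p2) ->
  is_walk adj x y w -> size w < m1 + m2 -> False.
Proof.
move=> [hw hs] hz m1 m2 w h1 h2 hw' hlt.
have [p1 [p2 [w1 w2 e]]] := walk_split hw hz.
have := hs _ hw'; rewrite e => hle.
have := leq_add (h1 _ w1) (h2 _ w2).
move=> h; have := leq_trans h hle; by rewrite leqNgt hlt.
Qed.

End Gen.

Section L.
Variable n : nat.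

Lemma mkP (k m : 'I_n) : k != m -> Lvert_pred (k, [set k; m]).
Proof. by move=> h; rewrite /Lvert_pred /= cards2 h set21. Qed.

Definition mkv (k m : 'I_n) (h : k != m) : Lvert n := exist _ (k, [set k; m]) (mkP h).

Lemma adj1 k m m' (h : k != m) (h' : k != m') : m != m' -> Ladj (mkv h) (mkv h').
Proof.
move=> hm; rewrite /Ladj /= eqxx orTb andbT.
apply/eqP => /(congr1 val) [] /eqP; rewrite eqEsubset => /andP[+ _].
move/subsetP => /(_ m); rewrite !inE eqxx orbT => /(_ isT).
by rewrite (negbTE hm) orbF => /eqP e; move: h; rewrite e eqxx.
Qed.

Lemma adj2 k m (h : k != m) (h' : m != k) : Ladj (mkv h) (mkv h').
Proof.
rewrite /Ladj /= setUC eqxx orbT andbT.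
by apply/eqP => /(congr1 val) [] /eqP; rewrite (negbTE h).
Qed.

Lemma neqv k m k' m' (h : k != m) (h' : k' != m') x :
  x \in [set k; m] -> x \notin [set k'; m'] -> mkv h != mkv h'.
Proof. by move=> h1 h2; apply/eqP => /(congr1 val) [] _ e; move: h2; rewrite -e h1. Qed.

Lemma neqv1 k m k' m' (h : k != m) (h' : k' != m') : k != k' -> mkv h != mkv h'.
Proof. by move=> hk; apply/eqP => /(congr1 val) [] e _; move: hk; rewrite e eqxx. Qed.

Lemma nadj k m k' m' (h : k != m) (h' : k' != m') x : k != k' ->
  x \in [set k; m] -> x \notin [set k'; m'] -> ~~ Ladj (mkv h) (mkv h').
Proof.
move=> hk h1 h2; rewrite /Ladj /= negb_and negb_or (negbTE hk) /=.
by apply/orP; right; apply/eqP => e; move: h2; rewrite -e h1.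
Qed.

Lemma NW_char (r : 'I_n) s : s \in NW r -> exists k (h : k != r), s = mkv h.
Proof.
rewrite /NW /nbhd_set inE => /andP[hs /existsP[y /andP[hy]]].
rewrite /W !inE in hs hy.
case: s hs => [[k S] hS] /= hkr.
rewrite /Ladj /= => /andP[hne /orP[/eqP e|/eqP e]].
  by case/negP: hkr; rewrite -e (eqP hy).
have hkr' : k != r by [].
exists k, hkr'; apply: val_inj => /=; congr pair.
clear hne; case: y hy e => [[y1 Y] hY] /= /eqP hy1 e; subst Y y1.
move: hS hY; rewrite /Lvert_pred /= => /andP[/eqP c hk] /andP[_ hr].
apply/esym/eqP; rewrite eqEcard c cards2 hkr' leqnn andbT.
by apply/subsetP => x; rewrite !inE => /orP[] /eqP ->.
Qed.

End L.

Lemma two_others (n : nat) (hn : 5 <= n) (r : 'I_n) :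
  exists a b : 'I_n, [/\ r != a, r != b & a != b].
Proof.
have h0 : 0 < n by apply: leq_trans hn.
have h1 : 1 < n by apply: leq_trans hn.
have h2 : 2 < n by apply: leq_trans hn.
set x0 := Ordinal h0; set x1 := Ordinal h1; set x2 := Ordinal h2.
case: (eqVneq r x0) => [->|n0]; first by exists x1, x2.
case: (eqVneq r x1) => [->|n1]; first by exists x0, x2.
by exists x0, x1.
Qed.

Theorem proposition3p3 (n : nat) (hn : 5 <= n) (r : 'I_n) :
  ~ strong_resolving (@Ladj n) (NW r).
Proof.
move=> H.
have [a [b [ra rb ab]]] := two_others hn r.
have ar : a != r by rewrite eq_sym.
have br : b != r by rewrite eq_sym.
have ba : b != a by rewrite eq_sym.
have rnq : r \notin [set a; b] by rewrite !inE negb_or ra rb.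
have bnp : b \notin [set r; a] by rewrite !inE negb_or eq_sym rb eq_sym ab.
have pq : mkv ra != mkv ab by apply: neqv1.
have [s hs [[P [hP hin]]|[P [hP hin]]]] := H _ _ pq.
-
  have [k [kr es]] := NW_char hs; subst s.
  have rk : r != k by rewrite eq_sym.
  have qp1 : mkv ab != mkv ra by rewrite eq_sym.
  have qpw : forall w, is_walk (@Ladj n) (mkv ab) (mkv ra) w -> 2 <= size w.
    move=> w hw; apply: walk_ge2 hw qp1 _.
    by apply: (nadj _ _ (x := b)); rewrite ?set22 // eq_sym.
  have psw : forall w, is_walk (@Ladj n) (mkv ra) (mkv kr) w -> 1 <= size w.
    by move=> w hw; apply: (walk_ge1 hw); apply: neqv1.
  case: (eqVneq k a) => [ka|ka].
  + subst k.
    refine (sp_bound hP hin (m1 := 2) (m2 := 1) (w := [:: mkv kr]) qpw psw _ _) => //.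
    by split => //=; rewrite andbT adj1.
  + have ak : a != k by rewrite eq_sym.
    have pw : forall w, is_walk (@Ladj n) (mkv ra) (mkv kr) w -> 2 <= size w.
      move=> w hw; apply: walk_ge2 hw _ _; first by apply: neqv1.
      by apply: (nadj _ _ (x := a)); rewrite ?set22 // !inE negb_or ak.
    case: (eqVneq k b) => [kb|kb].
    * subst k.
      refine (sp_bound hP hin (m1 := 2) (m2 := 2) (w := [:: mkv ba; mkv kr]) qpw pw _ _) => //.
      by split => //=; rewrite adj2 adj1.
    * have bk : b != k by rewrite eq_sym.
      refine (sp_bound hP hin (m1 := 2) (m2 := 2) (w := [:: mkv ak; mkv ka; mkv kr]) qpw pw _ _) => //.
      by split => //=; rewrite adj1 // adj2 adj1.
-
  have [k [kr es]] := NW_char hs; subst s.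
  have rk : r != k by rewrite eq_sym.
  have pqw : forall w, is_walk (@Ladj n) (mkv ra) (mkv ab) w -> 2 <= size w.
    move=> w hw; apply: walk_ge2 hw pq _.
    by apply: (nadj _ _ (x := r)); rewrite ?set21.
  have qsw : forall w, is_walk (@Ladj n) (mkv ab) (mkv kr) w -> 1 <= size w.
    move=> w hw; apply: (walk_ge1 hw); rewrite eq_sym.
    by apply: (neqv _ _ (x := r)); rewrite ?set22.
  case: (eqVneq k a) => [ka|ka].
  + subst k.
    refine (sp_bound hP hin (w := [:: mkv kr]) pqw qsw _ _) => //.
    by split => //=; rewrite andbT adj2.
  + have ak : a != k by rewrite eq_sym.
    refine (sp_bound hP hin (w := [:: mkv rk; mkv kr]) pqw qsw _ _) => //.
    by split => //=; rewrite adj1 // adj2.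
Qed.
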